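(* Let $A$ be a finite-dimensional evolution algebra. Then $A$ is semisimple if and only if $A$ has a unit.
   Context: An evolution algebra is an algebra $A$ over $\mathbb{K}\in\{\mathbb{R},\mathbb{C}\}$ with a basis $\{e_i\}$ (natural basis) with $e_ie_j=0$ for $i\neq j$. An ideal $M$ is modular if some $u\in A$ satisfies $a-au\in M$ for all $a\in A$; $\mathrm{Rad}(A)$ is the intersection of all maximal modular ideals (equal to $A$ if there are none); $A$ is semisimple if $\mathrm{Rad}(A)=\{0\}$. *)

(* Defs.v *)
From HB Require Import structures.
From mathcomp Require Import all_boot all_order all_algebra.
Set Implicit Arguments. Unset Strict Implicit. Unset Printing Implicit Defensive.
Import GRing.Theory.
Local Open Scope ring_scope.

(* A finite-dimensional evolution algebra over K with natural basis
   e_0, ..., e_(n-1) is (up to isomorphism) K^n = 'rV[K]_n with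
   e_i e_j = 0 for i <> j and e_i e_i = sum_k C i k e_k, where
   C : 'M[K]_n is the matrix of structure constants.  Bilinear
   extension gives (x y)_k = sum_i x_i y_i C_(i,k). *)
Definition evo_mul (K : fieldType) (n : nat) (C : 'M[K]_n)
  (x y : 'rV[K]_n) : 'rV[K]_n :=
  \row_(k < n) \sum_(i < n) x 0 i * y 0 i * C i k.

(* Subspaces of A are represented as row spaces of square matrices. *)
Definition evo_ideal (K : fieldType) (n : nat) (C : 'M[K]_n) (M : 'M[K]_n) : Prop :=
  forall x y : 'rV[K]_n, (x <= M)%MS ->
    (evo_mul C x y <= M)%MS /\ (evo_mul C y x <= M)%MS.

Definition evo_modular (K : fieldType) (n : nat) (C : 'M[K]_n) (M : 'M[K]_n) : Prop :=
  exists u : 'rV[K]_n, forall a : 'rV[K]_n, (a - evo_mul C a u <= M)%MS.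

(* Maximal modular ideal: a proper modular ideal which is maximal among
   proper ideals (equivalently among proper modular ideals, since any
   ideal containing a modular ideal is modular). *)
Definition evo_max_modular (K : fieldType) (n : nat) (C : 'M[K]_n) (M : 'M[K]_n) : Prop :=
  [/\ evo_ideal C M, evo_modular C M, ~~ row_full M &
      forall N : 'M[K]_n, evo_ideal C N -> (M <= N)%MS ->
        (N == M)%MS \/ row_full N].

(* x lies in Rad(A), the intersection of all maximal modular ideals
   (this is all of A when there are none). *)
Definition evo_in_rad (K : fieldType) (n : nat) (C : 'M[K]_n) (x : 'rV[K]_n) : Prop :=
  forall M : 'M[K]_n, evo_max_modular C M -> (x <= M)%MS.

Definition evo_semisimple (K : fieldType) (n : nat) (C : 'M[K]_n) : Prop :=
  forall x : 'rV[K]_n, evo_in_rad C x -> x = 0.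

Definition evo_has_unit (K : fieldType) (n : nat) (C : 'M[K]_n) : Prop :=
  exists u : 'rV[K]_n, forall a : 'rV[K]_n,
    evo_mul C a u = a /\ evo_mul C u a = a.

(* Main.v *)
Require Import Defs.
From HB Require Import structures.
From mathcomp Require Import all_boot all_order all_algebra.
Set Implicit Arguments. Unset Strict Implicit. Unset Printing Implicit Defensive.
Import GRing.Theory.
Local Open Scope ring_scope.

Section S.
Variables (K : fieldType) (n : nat) (C : 'M[K]_n).
Local Notation mul := (evo_mul C).
Local Notation e j := (delta_mx (0:'I_1) j : 'rV[K]_n).

Lemma mulC x y : mul x y = mul y x.
Proof. by apply/rowP=> k; rewrite !mxE; apply: eq_bigr=> i _; rewrite (mulrC (x 0 i)). Qed.

Lemma mulDl x y z : mul (x + y) z = mul x z + mul y z.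
Proof. by apply/rowP=> k; rewrite !mxE -big_split; apply: eq_bigr=> i _; rewrite !mxE !mulrDl. Qed.

Lemma mulZl a x z : mul (a *: x) z = a *: mul x z.
Proof. by apply/rowP=> k; rewrite !mxE mulr_sumr; apply: eq_bigr=> i _; rewrite !mxE !mulrA. Qed.

Lemma mulBl x y z : mul (x - y) z = mul x z - mul y z.
Proof. by rewrite mulDl -scaleN1r mulZl scaleN1r. Qed.

Lemma mul_el j y : mul (e j) y = y 0 j *: row j C.
Proof.
apply/rowP=> k; rewrite !mxE (bigD1 j) //= big1 => [|i ij]; last by rewrite mxE (negbTE ij) /= !mul0r.
by rewrite mxE !eqxx /= mul1r addr0.
Qed.

Lemma mul_er j y : mul y (e j) = y 0 j *: row j C.
Proof. by rewrite mulC mul_el. Qed.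

Lemma ee i j : (e i) 0 j = (i == j)%:R.
Proof. by rewrite mxE eqxx /= eq_sym. Qed.

Lemma span_lemma (m : nat) (M : 'M[K]_(m, n)) (j : 'I_n) (x : 'rV[K]_n) :
  (forall i, i != j -> (e i <= M)%MS) -> x 0 j = 0 -> (x <= M)%MS.
Proof.
move=> H xj; rewrite (row_sum_delta x); apply: summx_sub=> i _.
case: (eqVneq i j)=> [->|ij]; first by rewrite xj scale0r sub0mx.
by apply: scalemx_sub; apply: H.
Qed.

Definition good (j : 'I_n) := C j j != 0 /\ forall i, i != j -> C i j = 0.

Lemma good_diag : (forall j, good j) -> forall i k, i != k -> C i k = 0.
Proof. by move=> H i k ik; apply: (H k).2. Qed.

Lemma good_unit : (forall j, good j) -> evo_has_unit C.
Proof.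
move=> H; exists (\row_i (C i i)^-1) => a.
suff E : mul a (\row_i (C i i)^-1) = a by split=> //; rewrite mulC.
apply/rowP=> k; rewrite !mxE (bigD1 k) //= big1 => [|i ik]; last by rewrite (H k).2 // mulr0.
by rewrite mxE addr0 -mulrA mulVf ?mulr1 //; case: (H k).
Qed.

Lemma unit_good : evo_has_unit C -> forall j, good j.
Proof.
case=> u Hu.
have F i : u 0 i *: row i C = e i by rewrite -mul_er mulC; case: (Hu (e i)).
have Fii i : u 0 i * C i i = 1.
  by have := congr1 (fun v : 'rV[K]_n => v 0 i) (F i); rewrite !mxE !eqxx.
move=> j; split.
  by apply/eqP=> c0; have := Fii j; rewrite c0 mulr0 => /eqP; rewrite eq_sym oner_eq0.
move=> i ij.
have := congr1 (fun v : 'rV[K]_n => v 0 j) (F i); rewrite !mxE eqxx /= eq_sym (negbTE ij) /= => /eqP.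
rewrite mulf_eq0 => /orP [/eqP u0|/eqP //].
by have := Fii i; rewrite u0 mul0r => /eqP; rewrite eq_sym oner_eq0.
Qed.

Definition Mj (j : 'I_n) : 'M[K]_n := diag_mx (\row_k (k != j)%:R).

Lemma Mj_sub j (x : 'rV[K]_n) : (x <= Mj j)%MS = (x 0 j == 0).
Proof.
apply/idP/idP.
  case/submxP=> w ->; by rewrite mul_mx_diag !mxE eqxx mulr0.
move/eqP=> xj; apply/submxP; exists x; apply/rowP=> k.
rewrite mul_mx_diag !mxE; case: (eqVneq k j)=> [->|]; first by rewrite xj mul0r.
by rewrite mulr1.
Qed.

Lemma Mj_max (H : forall j, good j) j : evo_max_modular C (Mj j).
Proof.
have D := good_diag H.
have rowj : row j C = C j j *: e j.
  apply/rowP=> k; rewrite !mxE eqxx /=; case: (eqVneq j k)=> [->|jk]; first by rewrite mulr1.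
  by rewrite mulr0 D.
have ej : ~~ (e j <= Mj j)%MS by rewrite Mj_sub ee eqxx oner_eq0.
have id : evo_ideal C (Mj j).
  move=> x y; rewrite Mj_sub => /eqP xj.
  suff P : (mul x y <= Mj j)%MS by split=> //; rewrite mulC.
  rewrite Mj_sub mxE (bigD1 j) //= big1 => [|i ij]; first by rewrite xj !mul0r addr0.
  by rewrite (H j).2 // mulr0.
split=> //.
- exists ((C j j)^-1 *: e j) => a; rewrite Mj_sub !mxE (bigD1 j) //= big1 => [|i ij].
    by rewrite !mxE !eqxx /= mulr1 addr0 -mulrA mulVf ?mulr1 ?subrr //; case: (H j).
  by rewrite !mxE (negbTE ij) /= !mulr0 mul0r.
- by apply: contra ej=> F; apply: submx_full.
move=> N idN MN; case: (boolP (N <= Mj j)%MS)=> NM; first by left; apply/andP.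
right; rewrite -sub1mx.
have [i Ni] : exists i, ~~ (row i N <= Mj j)%MS.
  by apply/existsP; rewrite -negb_forall; apply: contra NM => /forallP F; apply/row_subP => i; exact: F i.
have eN : (e j <= N)%MS.
  have := (idN _ (e j) (row_sub i N)).1; rewrite mul_er rowj scalerA.
  move/(scalemx_sub ((row i N 0 j * C j j)^-1)); rewrite scalerA mulVf ?scale1r //.
  rewrite mulf_eq0 negb_or -Mj_sub Ni /=; by case: (H j).
apply/row_subP=> k; set a := row k _.
have -> : a = (a - a 0 j *: e j) + a 0 j *: e j by rewrite subrK.
apply: addmx_sub; last exact: scalemx_sub.
by apply: submx_trans MN; rewrite Mj_sub !mxE !eqxx mulr1 subrr.
Qed.

Lemma good_ss : (forall j, good j) -> evo_semisimple C.
Proof.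
move=> H x Hx; apply/rowP=> j; rewrite mxE; apply/eqP; rewrite -Mj_sub.
exact: Hx _ (Mj_max H j).
Qed.

Lemma e_neq0 j : e j != 0.
Proof. by apply/eqP=> /rowP/(_ j); rewrite !mxE !eqxx => /eqP; rewrite oner_eq0. Qed.

Lemma rad_or_good j M : evo_max_modular C M -> (e j <= M)%MS \/ good j.
Proof.
case=> Mid [u Hu] Mnf Mmax.
case: (boolP (e j <= M)%MS)=> Hej; [by left | right].
have Hui i : (e i - u 0 i *: row i C <= M)%MS by rewrite -mul_el; apply: Hu.
have uj : u 0 j != 0.
  by apply: contra Hej => /eqP u0; have := Hui j; rewrite u0 scale0r subr0.
set N : 'M[K]_n := (M + e j)%MS.
have MN : (M <= N)%MS := addsmxSl _ _.
have eN : (e j <= N)%MS := addsmxSr _ _.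
have rN : (row j C <= N)%MS.
  have : (u 0 j *: row j C <= N)%MS.
    have -> : u 0 j *: row j C = e j - (e j - u 0 j *: row j C) by rewrite opprB addrC subrK.
    by apply: addmx_sub=> //; rewrite -scaleN1r; apply: scalemx_sub; apply: submx_trans MN.
  by move/(scalemx_sub (u 0 j)^-1); rewrite scalerA mulVf ?scale1r.
have decomp x : (x <= N)%MS -> exists m c, (m <= M)%MS /\ x = m + c *: e j.
  case/sub_addsmxP=> [[v w]] /= ->; exists (v *m M), (w 0 0); split; first exact: submxMl.
  congr (_ + _); apply/rowP=> k; rewrite !mxE big_ord1 !mxE.
  by rewrite (ord1 (_ : 'I_1)).
have idN : evo_ideal C N.
  move=> x y /decomp [m [c [mM ->]]].
  suff P : (mul (m + c *: e j) y <= N)%MS by split=> //; rewrite mulC.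
  rewrite mulDl mulZl mul_el; apply: addmx_sub.
    by apply: submx_trans MN; exact: (Mid m y mM).1.
  by apply: scalemx_sub; apply: scalemx_sub.
have fN : row_full N.
  case: (Mmax N idN MN)=> // /andP [NM _].
  by move: Hej; rewrite (submx_trans eN NM).
have eiM i : i != j -> (e i <= M)%MS.
  move=> ij; have [m [c [mM Ei]]] := decomp (e i) (submx_full _ fN).
  have sq : mul (e i) (e i) = row i C by rewrite mul_el ee eqxx scale1r.
  have sqM : (row i C <= M)%MS.
    rewrite -sq {1}Ei mulDl mulZl mul_el ee (negbTE ij) scale0r scaler0 addr0.
    exact: (Mid m _ mM).1.
  have -> : e i = (e i - u 0 i *: row i C) + u 0 i *: row i C by rewrite subrK.
  by apply: addmx_sub; [apply: Hui | apply: scalemx_sub].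
have Mcoord (x : 'rV[K]_n) : (x <= M)%MS -> x 0 j = 0.
  move=> xM; apply/eqP; apply/negPn/negP => xj.
  have : ((x 0 j) *: e j <= M)%MS.
    have -> : x 0 j *: e j = x - (x - x 0 j *: e j) by rewrite opprB addrC subrK.
    apply: addmx_sub => //; rewrite -scaleN1r; apply: scalemx_sub.
    by apply: (span_lemma (j:=j)) => //; rewrite !mxE !eqxx mulr1 subrr.
  move/(scalemx_sub (x 0 j)^-1); rewrite scalerA mulVf ?scale1r //.
  by apply/negP.
split.
  apply/eqP=> c0; have := Mcoord _ (Hui j); rewrite !mxE !eqxx c0 mulr0 subr0 => /eqP.
  by rewrite oner_eq0.
move=> i ij; have := Mcoord _ (Mid _ (e i) (eiM i ij)).1.
by rewrite mul_el ee eqxx scale1r mxE.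
Qed.
End S.

From Stdlib Require Import Classical.

Theorem corollary3p15 (K : fieldType) (n : nat) (C : 'M[K]_n) :
  evo_semisimple C <-> evo_has_unit C.
Proof.
split; last by move/unit_good; apply: good_ss.
move=> H; apply: good_unit=> j; apply: NNPP=> ng.
have : evo_in_rad C (delta_mx 0 j).
  by move=> M /(rad_or_good j) [//|g]; case: (ng g).
by move/H/eqP; rewrite (negbTE (e_neq0 _ j)).
Qed.
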